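(* Let $d\ge 3$, let $q$ be a prime power, let $V=\mathbb{F}_q^d$ and $1\le k<d/2$. Let $G$ be a group with $\mathrm{PSL}_d(q)\trianglelefteq G\le \mathrm{Aut}(\mathrm{PSL}_d(q))=\mathrm{P}\Gamma\mathrm{L}_d(q)\rtimes\langle\iota\rangle$ and $G\not\le \mathrm{P}\Gamma\mathrm{L}_d(q)$, acting naturally on $$\Omega_k^2=\{\{W,U\}\mid \dim W=k,\ \dim U=d-k,\ W\le U\}.$$ Then $G$ is not $\mathrm{IBIS}$.
   Context: Here $\iota$ is the graph (inverse-transpose) automorphism, which acts on subspaces of $V$ as the standard polarity sending a $k$-dimensional subspace to a $(d-k)$-dimensional one (reversing inclusions). A base of a permutation group is a sequence of points with trivial pointwise stabilizer; it is irredundant if each successive stabilizer is strictly smaller. $G$ is $\mathrm{IBIS}$ if all irredundant bases have the same cardinality. *)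

(* Defs.v *)
From HB Require Import structures.
From mathcomp Require Import all_boot all_order all_algebra all_fingroup all_field.
Set Implicit Arguments. Unset Strict Implicit. Unset Printing Implicit Defensive.
Import GRing.Theory.
Local Open Scope ring_scope.

(* Subspaces of V = F^d are represented by their sets of vectors. *)
Definition subspace_dim (F : finFieldType) (d m : nat) (S : {set 'rV[F]_d}) : bool :=
  [exists A : 'M[F]_(m, d), (\rank A == m) && (S == [set v : 'rV[F]_d | (v <= A)%MS])].

Definition is_flagpair (F : finFieldType) (d k : nat) (x : {set {set 'rV[F]_d}}) : bool :=
  [exists W : {set 'rV[F]_d}, exists U : {set 'rV[F]_d},
    [&& x == [set W; U], subspace_dim k W, subspace_dim (d - k)%N U & W \subset U]].

Definition Omega (F : finFieldType) (d k : nat) :=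
  {x : {set {set 'rV[F]_d}} | is_flagpair k x}.

Definition semilin_img (F : finFieldType) (d : nat) (A : 'M[F]_d) (sigma : {rmorphism F -> F})
  (S : {set 'rV[F]_d}) : {set 'rV[F]_d} :=
  [set (map_mx sigma v) *m A | v in S].

Definition perp (F : finFieldType) (d : nat) (S : {set 'rV[F]_d}) : {set 'rV[F]_d} :=
  [set v : 'rV[F]_d | [forall w in S, v *m w^T == 0]].

(* permutations of Omega induced by PSL_d(q) (i.e. by SL_d(q)) *)
Definition is_PSL_perm (F : finFieldType) (d k : nat) (p : {perm Omega F d k}) : Prop :=
  exists A : 'M[F]_d, \det A = 1 /\
    forall x : Omega F d k, val (p x) = [set [set v *m A | v in S] | S : {set 'rV[F]_d} in val x].

Definition is_PGammaL_perm (F : finFieldType) (d k : nat) (p : {perm Omega F d k}) : Prop :=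
  exists (A : 'M[F]_d) (sigma : {rmorphism F -> F}), A \in unitmx /\
    forall x : Omega F d k, val (p x) = [set semilin_img A sigma S | S : {set 'rV[F]_d} in val x].

(* permutations of Omega induced by the coset PGammaL_d(q) * iota *)
Definition is_graph_perm (F : finFieldType) (d k : nat) (p : {perm Omega F d k}) : Prop :=
  exists (A : 'M[F]_d) (sigma : {rmorphism F -> F}), A \in unitmx /\
    forall x : Omega F d k, val (p x) = [set perp (semilin_img A sigma S) | S : {set 'rV[F]_d} in val x].

Definition is_Aut_perm (F : finFieldType) (d k : nat) (p : {perm Omega F d k}) : Prop :=
  is_PGammaL_perm p \/ is_graph_perm p.

Definition pw_stab (T : finType) (G : {group {perm T}}) (s : seq T) : {set {perm T}} :=
  [set g in G | all (fun x => g x == x) s].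

Definition is_base (T : finType) (G : {group {perm T}}) (s : seq T) : Prop :=
  pw_stab G s = 1%g.

Definition irredundant (T : finType) (G : {group {perm T}}) (s : seq T) : Prop :=
  forall i, (i < size s)%N -> pw_stab G (take i.+1 s) \proper pw_stab G (take i s).

Definition IBIS (T : finType) (G : {group {perm T}}) : Prop :=
  forall s t : seq T, is_base G s -> irredundant G s -> is_base G t -> irredundant G t ->
    size s = size t.

(* Main.v *)
Require Import Defs.
From HB Require Import structures.
From mathcomp Require Import all_boot all_order all_algebra all_fingroup all_field.
From mathcomp Require Import zify.
Set Implicit Arguments. Unset Strict Implicit. Unset Printing Implicit Defensive.
Import GRing.Theory.

Section Geo.
Local Open Scope ring_scope.
Variables (F : finFieldType) (d : nat).

Definition Iv (lo m : nat) : {set 'rV[F]_d} :=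
  [set v : 'rV[F]_d | [forall j : 'I_d, (v 0 j != 0) ==> (lo <= j < lo + m)%N]].

Definition evec (j : 'I_d) : 'rV[F]_d := delta_mx 0 j.

Lemma evec_entry (i j : 'I_d) : evec i 0 j = (j == i)%:R.
Proof. by rewrite /evec mxE eqxx. Qed.

Lemma evec_Iv lo m (i : 'I_d) : (evec i \in Iv lo m) = (lo <= i < lo + m)%N.
Proof.
rewrite inE; apply/forallP/idP => [H|H j].
  by move: (H i); rewrite evec_entry eqxx oner_eq0.
rewrite evec_entry; have [->|Hne] := eqVneq j i; first by rewrite H implybT.
by rewrite eqxx.
Qed.

Lemma Iv_sub lo m lo' m' : (lo' <= lo)%N -> (lo + m <= lo' + m')%N ->
  Iv lo m \subset Iv lo' m'.
Proof.
move=> H1 H2; apply/subsetP=> v; rewrite !inE => /forallP H; apply/forallP=> j.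
apply/implyP=> /(implyP (H j)) /andP[A B]; apply/andP; split; lia.
Qed.

Lemma Iv_dim lo m : (lo + m <= d)%N -> subspace_dim m (Iv lo m).
Proof.
move=> Hd.
pose B : 'M[F]_(m, d) := \matrix_(i, j) ((j == (lo + i)%N :> nat)%:R).
have BB : B *m B^T = 1%:M.
  apply/matrixP=> i i'; rewrite !mxE.
  have Hi : (lo + i < d)%N by have := ltn_ord i; lia.
  rewrite (bigD1 (Ordinal Hi)) //= big1 => [|j Hj]; last first.
    rewrite !mxE; case: eqP => [Ej|]; last by rewrite mul0r.
    by case/eqP: Hj; apply/val_inj.
  rewrite !mxE eqxx mul1r addr0 eqn_add2l.
  by case: (i =P i') => [->|/eqP Hne]; rewrite ?eqxx // (inj_eq val_inj) (negbTE Hne).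
apply/existsP; exists B; apply/andP; split.
  rewrite eqn_leq rank_leq_row /=.
  by rewrite -{1}(mxrank1 F m) -BB mxrankM_maxl.
apply/eqP/setP=> v; rewrite !inE; apply/forallP/idP => [H|].
  rewrite [v]row_sum_delta; apply: summx_sub => j _.
  have := H j; case: eqP => [-> _|/eqP Hv /= /andP[H1 H2]]; first by rewrite scale0r sub0mx.
  apply: scalemx_sub.
  have Hjm : (j - lo < m)%N by lia.
  have -> : delta_mx 0 j = row (Ordinal Hjm) B.
    apply/matrixP=> r c; rewrite !mxE /= ord1 eqxx /=.
    by congr (_%:R); rewrite /= subnKC.
  exact: row_sub.
case/submxP=> D -> j; apply/implyP; apply: contraR => Hj.
rewrite mxE big1 // => i _; rewrite mxE.
case: eqP => [E|]; last by rewrite mulr0.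
by exfalso; move: Hj; rewrite E; have := ltn_ord i; lia.
Qed.

Definition tv (i j : 'I_d) : 'M[F]_d := 1%:M + delta_mx i j.

Lemma det_tv i j : i != j -> \det (tv i j) = 1.
Proof.
move=> Hij.
have diag1 : forall r : 'I_d, tv i j r r = 1.
  move=> r; rewrite !mxE eqxx.
  have -> : (r == i) && (r == j) = false.
    by apply/negbTE/andP => [[/eqP Ei /eqP Ej]]; rewrite -Ei -Ej eqxx in Hij.
  by rewrite addr0.
case: (ltngtP i j) => [lt|gt|/val_inj E]; last by rewrite E eqxx in Hij.
- rewrite -det_tr det_trig; last first.
    apply/is_trig_mxP=> r c rc; rewrite !mxE.
    have -> : (c == r) = false by rewrite eq_sym; exact: (ltn_eqF rc).
    rewrite add0r; case: (c =P i) => [Ec|]; case: (r =P j) => [Er|] //=.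
    by move: rc lt; rewrite Ec Er; lia.
  by apply: big1 => r _; rewrite mxE diag1.
- rewrite det_trig; last first.
    apply/is_trig_mxP=> r c rc; rewrite !mxE.
    have -> : (r == c) = false by exact: (ltn_eqF rc).
    rewrite add0r; case: (r =P i) => [Er|]; case: (c =P j) => [Ec|] //=.
    by move: rc gt; rewrite Ec Er; lia.
  by apply: big1 => r _; rewrite diag1.
Qed.

Lemma mul_tv (v : 'rV[F]_d) (i j : 'I_d) : v *m tv i j = v + v 0 i *: evec j.
Proof.
rewrite mulmxDr mulmx1; congr (_ + _); apply/rowP=> c.
rewrite !mxE (bigD1 i) //= big1 => [|r Hr]; last by rewrite !mxE (negbTE Hr) mulr0.
by rewrite !mxE !eqxx addr0 mulr_natr.
Qed.

Lemma tv_unit (i j : 'I_d) : i != j -> tv i j \in unitmx.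
Proof. by move=> H; rewrite unitmxE det_tv // unitr1. Qed.

Lemma mulmx_inj (A : 'M[F]_d) : A \in unitmx -> injective (fun v : 'rV[F]_d => v *m A).
Proof. by move=> HA; apply: can_inj (mulmxK HA). Qed.

Definition mapS (A : 'M[F]_d) (S : {set 'rV[F]_d}) := [set v *m A | v in S].

Lemma tv_out lo m (i j : 'I_d) : ~~ (lo <= i < lo + m)%N -> mapS (tv i j) (Iv lo m) = Iv lo m.
Proof.
move=> Hi; rewrite /mapS -[RHS]imset_id; apply: eq_in_imset => v; rewrite inE => /forallP/(_ i) H.
case: (eqVneq (v 0 i) 0) => [E|Ne]; last by rewrite Ne /= in H; rewrite H in Hi.
by rewrite mul_tv E scale0r addr0.
Qed.

Lemma tv_in lo m (i j : 'I_d) : i != j -> (lo <= i < lo + m)%N -> (lo <= j < lo + m)%N ->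
  mapS (tv i j) (Iv lo m) = Iv lo m.
Proof.
move=> Hij Hi Hj; apply/eqP; rewrite eqEcard card_imset ?leqnn ?andbT; last first.
  exact: mulmx_inj (tv_unit Hij).
apply/subsetP=> w /imsetP[v Hv ->]; move: Hv; rewrite !inE => /forallP H.
apply/forallP=> c; rewrite mul_tv !mxE eqxx /=.
case: (c =P j) => [->|_] /=; first by rewrite Hj implybT.
by rewrite mulr0 addr0; apply: H.
Qed.

Lemma tv_vec (i j : 'I_d) : evec i *m tv i j = evec i + evec j.
Proof. by rewrite mul_tv evec_entry eqxx scale1r. Qed.

Lemma notin_sum lo m (i j : 'I_d) : i != j -> ~~ (lo <= j < lo + m)%N -> evec i + evec j \notin Iv lo m.
Proof.
move=> Hij Hj; rewrite inE negb_forall; apply/existsP; exists j.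
rewrite mxE !evec_entry eqxx; case: (j =P i) => [E|_]; first by rewrite E eqxx in Hij.
by rewrite add0r oner_eq0 /=.
Qed.

Definition mapX (A : 'M[F]_d) (X : {set {set 'rV[F]_d}}) := [set mapS A S | S in X].

Lemma mapX2 A W U : mapX A [set W; U] = [set mapS A W; mapS A U].
Proof. by rewrite /mapX imsetU1 imset_set1. Qed.

Lemma mapS_dim A m S : A \in unitmx -> subspace_dim m S -> subspace_dim m (mapS A S).
Proof.
move=> HA /existsP[B /andP[/eqP rB /eqP ->]]; apply/existsP; exists (B *m A).
rewrite mxrankMfree ?row_free_unit // rB eqxx /=.
apply/eqP/setP=> w; rewrite inE; apply/imsetP/idP => [[v]|].
  by rewrite inE => Hv ->; apply: submxMr.
case/submxP=> D ->; exists (D *m B); first by rewrite inE submxMl.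
by rewrite mulmxA.
Qed.

Lemma mapX_flag (k : nat) A X : A \in unitmx -> is_flagpair k X -> is_flagpair k (mapX A X).
Proof.
move=> HA /existsP[W /existsP[U /and4P[/eqP -> HW HU WU]]].
apply/existsP; exists (mapS A W); apply/existsP; exists (mapS A U).
by rewrite mapX2 eqxx !mapS_dim //= imsetS.
Qed.

Lemma mapX_inj A : A \in unitmx -> injective (mapX A).
Proof. by move=> HA; apply: imset_inj; apply: imset_inj; apply: mulmx_inj. Qed.

Section Perm.
Variable k : nat.

Definition flagmap (A : 'M[F]_d) (HA : A \in unitmx) (y : Omega F d k) : Omega F d k :=
  exist _ (mapX A (val y)) (mapX_flag HA (valP y)).

Lemma flagmap_inj (A : 'M[F]_d) (HA : A \in unitmx) : injective (flagmap HA).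
Proof. by move=> y z /(congr1 val) /= /(mapX_inj HA) /val_inj. Qed.

Definition PSLp (A : 'M[F]_d) (HA : A \in unitmx) : {perm Omega F d k} := perm (@flagmap_inj A HA).

Lemma PSLp_val (A : 'M[F]_d) (HA : A \in unitmx) y : val (PSLp HA y) = mapX A (val y).
Proof. by rewrite permE. Qed.

Lemma PSLp_is (A : 'M[F]_d) (HA : A \in unitmx) : \det A = 1 -> is_PSL_perm (PSLp HA).
Proof. by move=> H; exists A; split => // y; rewrite PSLp_val. Qed.
End Perm.
End Geo.

Section Pair.
Variable T : finType.
Lemma pair_mono (h : {set T} -> {set T}) (W U : {set T}) :
  (forall A B : {set T}, A \subset B -> h A \subset h B) -> W \subset U -> ~~ (U \subset W) ->
  [set h W; h U] = [set W; U] -> h W = W /\ h U = U.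
Proof.
move=> hm WU UW E.
have hW : h W \in [set W; U] by rewrite -E set21.
have Wh : W \in [set h W; h U] by rewrite E set21.
have Uh : U \in [set h W; h U] by rewrite E set22.
case/set2P: hW => [hWW|hWU].
  split=> //; case/set2P: Uh => [UW'|] //; by rewrite UW' hWW subxx in UW.
case/set2P: Wh => [WU'|WhU]; first by rewrite -hWU -WU' subxx in UW.
by move: (hm _ _ WU); rewrite hWU -WhU (negbTE UW).
Qed.

Lemma pair_anti (h : {set T} -> {set T}) (W U : {set T}) :
  (forall A B : {set T}, A \subset B -> h B \subset h A) -> W \subset U -> ~~ (U \subset W) ->
  [set h W; h U] = [set W; U] -> h W = U /\ h U = W.
Proof.
move=> hm WU UW E.
have hW : h W \in [set W; U] by rewrite -E set21.
have Wh : W \in [set h W; h U] by rewrite E set21.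
have Uh : U \in [set h W; h U] by rewrite E set22.
case/set2P: hW => [hWW|hWU].
  case/set2P: Uh => [UW'|UhU]; first by rewrite UW' hWW subxx in UW.
  by move: (hm _ _ WU); rewrite hWW -UhU (negbTE UW).
split=> //; case/set2P: Wh => [WU'|] //; by rewrite -hWU -WU' subxx in UW.
Qed.

Lemma pair_ne (P Q W U : {set T}) w : w \in P -> w \notin U -> W \subset U ->
  [set P; Q] != [set W; U].
Proof.
move=> wP wU WU; apply/eqP=> E.
have : P \in [set W; U] by rewrite -E set21.
case/set2P=> EP; last by rewrite -EP wP in wU.
by move: wU; rewrite (subsetP WU) // -EP.
Qed.
End Pair.
Section Comb.
Variables (T : finType) (G : {group {perm T}}).

Lemma pw_stab_cat s u : pw_stab G (s ++ u) \subset pw_stab G s.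
Proof.
by apply/subsetP=> g; rewrite !inE all_cat => /andP[-> /andP[-> _]].
Qed.

Lemma pw_stab_eq s t : s =i t -> pw_stab G s = pw_stab G t.
Proof. by move=> st; apply/setP=> g; rewrite !inE (eq_all_r st). Qed.

Lemma one_pw_stab s : 1%g \in pw_stab G s.
Proof. by rewrite inE group1; apply/allP=> x _; rewrite perm1. Qed.

Lemma extend s : irredundant G s ->
  exists u, is_base G (s ++ u) /\ irredundant G (s ++ u).
Proof.
move: {2}#|pw_stab G s| (leqnn #|pw_stab G s|) => n.
elim: n s => [|n IH] s Hn Hs.
  by move: Hn; rewrite leqn0 => /eqP/cards0_eq/setP/(_ 1%g); rewrite one_pw_stab inE.
case: (eqVneq (pw_stab G s) 1%g) => [Hb|Hnb].
  by exists [::]; rewrite cats0.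
have [g Hg Hg1] : exists2 g, g \in pw_stab G s & g != 1%g.
  case: (pickP (fun g => (g \in pw_stab G s) && (g != 1%g))) => [g /andP[]|H]; first by exists g.
  case/eqP: Hnb; apply/eqP; rewrite eqEsubset sub1set one_pw_stab andbT.
  apply/subsetP=> g Hg; move: (H g); rewrite Hg /= => /negbFE/eqP->; exact: set11.
have [y Hy] : exists y, g y != y.
  apply/existsP; apply: contraR Hg1; rewrite negb_exists => /forallP H.
  by apply/eqP/permP=> z; rewrite perm1; apply/eqP; move: (H z); rewrite negbK.
have Hp : pw_stab G (rcons s y) \proper pw_stab G s.
  apply/properP; split; first by rewrite -cats1 pw_stab_cat.
  exists g => //; rewrite inE all_rcons negb_and; apply/orP; right; by rewrite negb_and Hy.
have Hs1 : irredundant G (rcons s y).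
  move=> i; rewrite size_rcons ltnS leq_eqVlt => /orP[/eqP-> | lti].
    by rewrite take_oversize ?size_rcons // -cats1 take_size_cat //; rewrite cats1.
  by rewrite -cats1 !takel_cat //; [apply: Hs | apply: ltnW].
have := IH (rcons s y); case.
- by move: (proper_card Hp) => H; rewrite -ltnS; apply: leq_trans H Hn.
- exact: Hs1.
move=> u [Hu1 Hu2]; exists (y :: u).
by rewrite -cat_rcons.
Qed.

Lemma remove_pt p y r : pw_stab G p \subset pw_stab G (rcons p y) ->
  pw_stab G (p ++ r) = pw_stab G (p ++ y :: r).
Proof.
move=> H; apply/eqP; rewrite eqEsubset; apply/andP; split; last first.
  apply/subsetP=> g; rewrite !inE !all_cat /= => /andP[gG /andP[Hp /andP[_ Hr]]].
  by rewrite gG Hp Hr.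
apply/subsetP=> g; rewrite !inE !all_cat /= => /andP[gG /andP[Hp Hr]].
have : g \in pw_stab G (rcons p y) by apply: (subsetP H); rewrite inE gG.
by rewrite inE all_rcons => /andP[_ /andP[Hy _]]; rewrite gG Hp Hy Hr.
Qed.

Lemma prune n t : size t <= n -> is_base G t ->
  exists t0, [/\ is_base G t0, irredundant G t0 & size t0 <= size t].
Proof.
elim: n t => [|n IH] t Hn Hb.
  move: Hn; rewrite leqn0 => /nilP Ht; exists t; split => //.
  by move=> i; rewrite Ht.
case: (boolP [forall i : 'I_(size t), pw_stab G (take i.+1 t) \proper pw_stab G (take i t)]).
  move/forallP=> H; exists t; split => // i Hi.
  exact: (H (Ordinal Hi)).
rewrite negb_forall => /existsP[[i Hi] /= Hnp].
case: t Hi Hn Hb Hnp => [//|x0 t'] Hi Hn Hb Hnp.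
have Et : x0 :: t' = take i (x0 :: t') ++ nth x0 (x0 :: t') i :: drop i.+1 (x0 :: t').
  by rewrite -drop_nth // cat_take_drop.
have Hsp : size (take i (x0 :: t')) = i by rewrite size_take Hi.
move: (take i _) (nth _ _ _) (drop _ _) Et Hsp => p y r Et Hsp.
rewrite Et in Hnp Hb Hn *; rewrite -Hsp in Hnp.
have E1 : take (size p).+1 (p ++ y :: r) = rcons p y.
  by elim: (p) => [|a p' IHp] /=; [rewrite take0 | rewrite IHp].
rewrite E1 take_size_cat // in Hnp.
have Hsub : pw_stab G p \subset pw_stab G (rcons p y).
  by move: Hnp; rewrite /proper -cats1 pw_stab_cat /= negbK.
have Hb' : is_base G (p ++ r) by rewrite /is_base (remove_pt _ Hsub).
have Hn' : size (p ++ r) <= n by move: Hn; rewrite !size_cat /= addnS ltnS.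
have [t0 [H1 H2 H3]] := IH (p ++ r) Hn' Hb'.
exists t0; split => //; apply: leq_trans H3 _; rewrite !size_cat /= leq_add2l; exact: leqnSn.
Qed.

Lemma prune_lt t i : is_base G t -> i < size t ->
  pw_stab G (take i t) \subset pw_stab G (take i.+1 t) ->
  exists t0, [/\ is_base G t0, irredundant G t0 & size t0 < size t].
Proof.
case: t => [//|x0 t'] Hb Hi Hsub0.
have Et : x0 :: t' = take i (x0 :: t') ++ nth x0 (x0 :: t') i :: drop i.+1 (x0 :: t').
  by rewrite -drop_nth // cat_take_drop.
have Hsp : size (take i (x0 :: t')) = i by rewrite size_take Hi.
move: (take i _) (nth _ _ _) (drop _ _) Et Hsp => p y r Et Hsp.
rewrite Et in Hb Hsub0 *; rewrite -Hsp in Hsub0.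
have E1 : take (size p).+1 (p ++ y :: r) = rcons p y.
  by elim: (p) => [|a p' IHp] /=; [rewrite take0 | rewrite IHp].
rewrite E1 take_size_cat // in Hsub0.
have Hb' : is_base G (p ++ r) by rewrite /is_base (remove_pt _ Hsub0).
have [t0 [H1 H2 H3]] := prune (leqnn _) Hb'.
exists t0; split => //; apply: leq_ltn_trans H3 _; rewrite !size_cat /= ltn_add2l; exact: ltnSn.
Qed.

Lemma notIBIS s t i : irredundant G s -> s =i t -> size t <= size s -> i < size t ->
  pw_stab G (take i t) \subset pw_stab G (take i.+1 t) -> ~ IBIS G.
Proof.
move=> Hs st Hsz Hi Hsub HI.
have [u [Hb Hirr]] := extend Hs.
have Hb2 : is_base G (t ++ u).
  rewrite /is_base -Hb; apply: pw_stab_eq => z; by rewrite !mem_cat st.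
have Hi2 : i < size (t ++ u) by rewrite size_cat; apply: leq_trans Hi (leq_addr _ _).
have Hsub2 : pw_stab G (take i (t ++ u)) \subset pw_stab G (take i.+1 (t ++ u)).
  by rewrite !takel_cat // ltnW.
have [t0 [H1 H2 H3]] := prune_lt Hb2 Hi2 Hsub2.
have := HI _ _ Hb Hirr H1 H2.
move=> E; move: H3; rewrite -E !size_cat => H3; move: Hsz H3; rewrite ltn_add2r => A B; move: (leq_ltn_trans A B); by rewrite ltnn.
Qed.
End Comb.

Lemma perm3 (T : eqType) (x a c : T) : [:: x; a; c] =i [:: a; c; x].
Proof. by move=> z; rewrite !inE; case: (z == x); case: (z == a); case: (z == c). Qed.

Ltac nlia := (match goal with
  | [ a : is_true (2 < ?d)%N, b : is_true (0 < ?k)%N, c : is_true (2 * ?k < ?d)%N |- _ ] =>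
      clear - a b c end; lia) || lia.

Unset Implicit Arguments.
Set Strict Implicit.

Theorem lemma3p6 (F : finFieldType) (d k : nat) (G : {group {perm Omega F d k}}) :
  (3 <= d)%N -> (1 <= k)%N -> (2 * k < d)%N ->
  (forall p, is_PSL_perm p -> p \in G) ->
  (forall g s, g \in G -> is_PSL_perm s -> is_PSL_perm (g^-1 * s * g)%g) ->
  (forall p, p \in G -> is_Aut_perm p) ->
  (exists2 p, p \in G & ~ is_PGammaL_perm p) ->
  ~ IBIS G.
Proof.
move=> d3 k1 dk HPSL _ HAut _.
have d0 : (0 < d)%N by nlia.
have kd : (k < d)%N by nlia.
have dkd : (d - k < d)%N by nlia.
pose i0 : 'I_d := Ordinal d0.
pose ik : 'I_d := Ordinal kd.
pose idk : 'I_d := Ordinal dkd.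
pose Wa := Iv F d 0 k. pose Ua := Iv F d 0 (d - k).
pose Wc := Iv F d 1 k. pose Uc := Iv F d 1 (d - k).
have WaUa : Wa \subset Ua by apply: Iv_sub; nlia.
have WcUc : Wc \subset Uc by apply: Iv_sub; nlia.
have WcUa : Wc \subset Ua by apply: Iv_sub; nlia.
have flag : forall W U : {set 'rV[F]_d}, subspace_dim k W -> subspace_dim (d - k) U -> W \subset U ->
    is_flagpair k [set W; U].
  move=> W U HW HU WU; apply/existsP; exists W; apply/existsP; exists U.
  by rewrite eqxx HW HU WU.
have dWa : subspace_dim k Wa by apply: Iv_dim; nlia.
have dUa : subspace_dim (d - k) Ua by apply: Iv_dim; nlia.
have dWc : subspace_dim k Wc by apply: Iv_dim; nlia.
have dUc : subspace_dim (d - k) Uc by apply: Iv_dim; nlia.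
pose aO : Omega F d k := exist (fun X => is_flagpair k X) _ (flag _ _ dWa dUa WaUa).
pose cO : Omega F d k := exist (fun X => is_flagpair k X) _ (flag _ _ dWc dUc WcUc).
pose xO : Omega F d k := exist (fun X => is_flagpair k X) _ (flag _ _ dWc dUa WcUa).
have i0k : i0 != ik by rewrite -(inj_eq val_inj) /=; nlia.
have ikdk : ik != idk by rewrite -(inj_eq val_inj) /=; nlia.
have idk0 : idk != i0 by rewrite -(inj_eq val_inj) /=; nlia.
have inG : forall (i j : 'I_d) (Hij : i != j), @PSLp F d k _ (tv_unit F Hij) \in G.
  by move=> i j Hij; apply: HPSL; apply: PSLp_is; apply: det_tv.
have fixE : forall (i j : 'I_d) (Hij : i != j) (y : Omega F d k),
    (@PSLp F d k _ (tv_unit F Hij) y == y) = (mapX (tv F i j) (val y) == val y).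
  by move=> i j Hij y; rewrite -val_eqE PSLp_val.
have ekUa : evec F ik \notin Wa by rewrite evec_Iv /=; nlia.
apply: (@notIBIS _ G [:: xO; aO; cO] [:: aO; cO; xO] 2).
- case=> [|[|[|i]]] //= _; apply/properP; split.
  + exact: (pw_stab_cat G [::] [:: xO]).
  + exists (@PSLp F d k _ (tv_unit F ikdk)); first by rewrite inE inG.
    rewrite inE inG /= andbT fixE /= mapX2.
    apply: (@pair_ne _ _ _ _ _ (evec F ik + evec F idk)%R) => //.
      by rewrite -tv_vec /mapS; apply: imset_f; rewrite evec_Iv /=; nlia.
    by apply: notin_sum => //=; nlia.
  + exact: (pw_stab_cat G [:: xO] [:: aO]).
  + exists (@PSLp F d k _ (tv_unit F i0k)).
      rewrite inE inG /= andbT fixE /= mapX2 tv_out /=; last nlia.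
      by rewrite tv_in //= ; nlia.
    rewrite inE inG /= andbT negb_and; apply/orP; right.
    rewrite fixE /= mapX2 (@tv_in _ _ 0 (d - k)) //=; try nlia.
    apply/eqP=> E.
    have : Wa \in [set mapS (tv F i0 ik) Wa; Ua] by rewrite E set21.
    case/set2P=> [EW|EU]; last first.
      by move: ekUa; rewrite EU evec_Iv /=; nlia.
    have : (evec F i0 + evec F ik)%R \in mapS (tv F i0 ik) Wa.
      by rewrite -tv_vec /mapS; apply: imset_f; rewrite evec_Iv /=; nlia.
    by rewrite -EW; apply/negP; apply: notin_sum => //=; nlia.
  + exact: (pw_stab_cat G [:: xO; aO] [:: cO]).
  + set g := @PSLp F d k _ (tv_unit F idk0).
    have gx : g xO == xO.
      rewrite fixE /= mapX2 (@tv_out F d 1 k idk i0) ?(@tv_out F d 0 (d - k) idk i0) /=; try nlia.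
      by rewrite /Wc /Ua eqxx.
    have ga : g aO == aO.
      rewrite fixE /= mapX2 (@tv_out F d 0 k idk i0) ?(@tv_out F d 0 (d - k) idk i0) /=; try nlia.
      by rewrite /Wa /Ua eqxx.
    have gc : g cO != cO.
      rewrite fixE /= mapX2 (@tv_out F d 1 k idk i0) /=; last nlia.
      rewrite setUC.
      apply: (@pair_ne _ _ _ _ _ (evec F idk + evec F i0)%R) => //.
        by rewrite -tv_vec /mapS; apply: imset_f; rewrite evec_Iv /=; nlia.
      by apply: notin_sum => //=; nlia.
    apply: (@ex_intro2 _ _ _ g); first by rewrite inE inG /= gx ga.
    by rewrite inE inG /= gx ga (negbTE gc).
- exact: perm3.
- by [].
- by [].
- apply/subsetP=> g; rewrite inE => /andP[gG /and3P[ga gc _]].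
  rewrite inE gG; apply/and4P; split => //.
  have nUaWa : ~~ (Ua \subset Wa).
    apply/negP => /subsetP/(_ (evec F ik)); rewrite !evec_Iv /= => H.
    have : (0 <= k < 0 + (d - k))%N by nlia.
    by move/H; nlia.
  have nUcWc : ~~ (Uc \subset Wc).
    apply/negP => /subsetP/(_ (evec F idk)); rewrite !evec_Iv /= => H.
    have : (1 <= d - k < 1 + (d - k))%N by nlia.
    by move/H; nlia.
  have Hv : forall h : {set 'rV[F]_d} -> {set 'rV[F]_d},
      (forall y : Omega F d k, val (g y) = [set h S | S in val y]) ->
      forall (W U : {set 'rV[F]_d}) (y : Omega F d k), val y = [set W; U] ->
      val (g y) = [set h W; h U].
    by move=> h Hh W U y Hy; rewrite Hh Hy imsetU1 imset_set1.
  case: (HAut g gG) => [[A [s [HA Hg]]] | [A [s [HA Hg]]]].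
  + have hm : forall X Y : {set 'rV[F]_d}, X \subset Y ->
        semilin_img A s X \subset semilin_img A s Y.
      by move=> X Y XY; apply: imsetS.
    have Ea := Hv _ Hg Wa Ua aO erefl; rewrite (eqP ga) in Ea.
    have Ec := Hv _ Hg Wc Uc cO erefl; rewrite (eqP gc) in Ec.
    have [_ hUa] := pair_mono hm WaUa nUaWa (esym Ea).
    have [hWc _] := pair_mono hm WcUc nUcWc (esym Ec).
    by rewrite -val_eqE (Hv _ Hg Wc Ua xO erefl) hWc hUa eqxx.
  + have hm : forall X Y : {set 'rV[F]_d}, X \subset Y ->
        perp (semilin_img A s Y) \subset perp (semilin_img A s X).
      move=> X Y XY; apply/subsetP=> v; rewrite !inE => /forallP H.
      apply/forallP=> w; apply/implyP=> wX; apply: (implyP (H w)).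
      exact: (subsetP (imsetS _ XY)).
    have Ea := Hv _ Hg Wa Ua aO erefl; rewrite (eqP ga) in Ea.
    have Ec := Hv _ Hg Wc Uc cO erefl; rewrite (eqP gc) in Ec.
    have [_ hUa] := pair_anti hm WaUa nUaWa (esym Ea).
    have [hWc _] := pair_anti hm WcUc nUcWc (esym Ec).
    have := hm _ _ WcUa; rewrite hUa hWc => /subsetP/(_ (evec F i0)).
    rewrite !evec_Iv /= => H.
    have : (0 <= 0 < 0 + k)%N by nlia.
    by move/H; nlia.
Qed.
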